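(* Let $k\ge1$ and let $Y$ be a random variable in $[0,1]^k$. Then for all $s>0$ and $r\ge0$, $$D^{(q)}(r\,|\,Y,\|\cdot\|_\infty,s)\le e^{-r/k}.$$ Moreover, if $Y_1\le\dots\le Y_k$ almost surely, the same bound holds when the infimum defining $D^{(q)}$ is restricted to codebooks $\mathcal C$ all of whose elements $\hat y$ satisfy $\hat y_1\le\dots\le\hat y_k$.
   Context: $D^{(q)}(r\,|\,Y,\|\cdot\|_\infty,s)=\inf\{(\mathbb E\min_{a\in\mathcal C}\|Y-a\|_\infty^s)^{1/s}:\mathcal C\subset\mathbb R^k\text{ finite},\ \log\#\mathcal C\le r\}$ (natural log). *)

(* Defs.v *)
From HB Require Import structures.
From mathcomp Require Import all_boot all_order all_algebra.
From mathcomp Require Import all_classical all_reals all_analysis.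
Set Implicit Arguments. Unset Strict Implicit. Unset Printing Implicit Defensive.
Import Order.TTheory GRing.Theory Num.Theory.
Local Open Scope ring_scope.
Local Open Scope classical_set_scope.

Definition supnorm {R : realType} {k : nat} (v : 'rV[R]_k) : R :=
  \big[Num.max/0]_(i < k) `|v ord0 i|.

Definition rvec {d} {T : measurableType d} {R : realType}
  {P : probability T R} {k : nat} (Y : 'I_k -> {RV P >-> R}) (x : T) : 'rV[R]_k :=
  \row_(i < k) Y i x.

Definition qerr {R : realType} {k : nat} (C : seq 'rV[R]_k) (y : 'rV[R]_k) : R :=
  match C with
  | [::] => 0
  | a0 :: C' => \big[Num.min/supnorm (y - a0)]_(a <- C') supnorm (y - a)
  end.

Definition rate_ok {R : realType} {k : nat} (r : R) (C : seq 'rV[R]_k) : Prop :=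
  C <> [::] /\ ln ((size (undup C))%:R) <= r.

Definition distortion {d} {T : measurableType d} {R : realType}
  {P : probability T R} {k : nat} (Y : 'I_k -> {RV P >-> R}) (s : R)
  (C : seq 'rV[R]_k) : \bar R :=
  ((\int[P]_x ((qerr C (rvec Y x)) `^ s)%:E) `^ s^-1)%E.

Definition Dq_restr {d} {T : measurableType d} {R : realType}
  {P : probability T R} {k : nat} (Y : 'I_k -> {RV P >-> R}) (s r : R)
  (adm : seq 'rV[R]_k -> Prop) : \bar R :=
  ereal_inf [set distortion Y s C | C in [set C | rate_ok r C /\ adm C]].

Definition Dq {d} {T : measurableType d} {R : realType}
  {P : probability T R} {k : nat} (Y : 'I_k -> {RV P >-> R}) (s r : R) : \bar R :=
  Dq_restr Y s r (fun _ => True).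

Definition monotone_codebook {R : realType} {k : nat} (C : seq 'rV[R]_k) : Prop :=
  forall a, a \in C -> forall i j : 'I_k, (i <= j)%N -> a ord0 i <= a ord0 j.

(* Main.v *)
Require Import Defs.
From HB Require Import structures.
From mathcomp Require Import all_boot all_order all_algebra.
From mathcomp Require Import all_classical all_reals all_analysis.
From mathcomp Require Import ring lra zify.
From mathcomp Require Import measurable_realfun.
Import Order.TTheory GRing.Theory Num.Theory.
Local Open Scope ring_scope.
Local Open Scope classical_set_scope.

Section Aux.
Context {R : realType}.

Lemma bigmin_le (I : eqType) (s : seq I) (F : I -> R) x0 b :
  b \in s -> \big[Num.min/x0]_(a <- s) F a <= F b.
Proof.
elim: s => // c s IH; rewrite inE big_cons => /orP[/eqP->|/IH h].
  by rewrite ge_min lexx.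
by rewrite ge_min h orbT.
Qed.

Lemma bigmin_le0 (I : eqType) (s : seq I) (F : I -> R) x0 :
  \big[Num.min/x0]_(a <- s) F a <= x0.
Proof.
elim: s => [|c s IH]; first by rewrite big_nil.
by rewrite big_cons ge_min IH orbT.
Qed.

Lemma supnorm_le k (v : 'rV[R]_k) e : 0 <= e -> (forall i, `|v ord0 i| <= e) ->
  supnorm v <= e.
Proof.
move=> e0 h; rewrite /supnorm; apply: (big_ind (fun x => x <= e)) => //.
by move=> a b ha hb; rewrite ge_max ha hb.
Qed.

Lemma supnorm_ge0 k (v : 'rV[R]_k) : 0 <= supnorm v.
Proof.
rewrite /supnorm; apply: (big_ind (fun x => 0 <= x)) => //.
by move=> a b ha hb; rewrite le_max ha.
Qed.

Lemma qerr_ge0 k (C : seq 'rV[R]_k) y : 0 <= qerr C y.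
Proof.
case: C => //= a0 C; apply: (big_ind (fun x => 0 <= x)) => //.
- exact: supnorm_ge0.
- by move=> a b ha hb; rewrite le_min ha hb.
- by move=> *; exact: supnorm_ge0.
Qed.

Lemma qerr_le k (C : seq 'rV[R]_k) y b : b \in C -> qerr C y <= supnorm (y - b).
Proof.
case: C => //= a0 C; rewrite inE => /orP[/eqP->|h].
  exact: bigmin_le0.
exact: bigmin_le.
Qed.

Variable n : nat.
Hypothesis n0 : (0 < n)%N.

Definition gp (j : 'I_n) : R := (2 * j%:R + 1) / (2 * n%:R).

Definition idxn (t : R) : nat := minn (Num.truncn (n%:R * t)) n.-1.

Lemma idxn_lt t : (idxn t < n)%N.
Proof. rewrite /idxn; lia. Qed.

Definition idx (t : R) : 'I_n := Ordinal (idxn_lt t).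

Lemma idx_mono t1 t2 : t1 <= t2 -> (idx t1 <= idx t2)%N.
Proof.
move=> h; rewrite /idx /idxn /=.
have : (Num.truncn (n%:R * t1) <= Num.truncn (n%:R * t2))%N.
  by apply: le_truncn; rewrite ler_wpM2l.
move=> H; rewrite leq_min geq_minr andbT; exact: leq_trans (geq_minl _ _) H.
Qed.

Lemma gp_mono (i j : 'I_n) : (i <= j)%N -> gp i <= gp j.
Proof.
move=> h; rewrite /gp ler_pM2r ?invr_gt0 ?mulr_gt0 ?ltr0n //.
by rewrite lerD2r ler_pM2l ?ler_nat.
Qed.

Lemma idx_bound t : 0 <= t <= 1 -> `|t - gp (idx t)| <= (2 * n%:R)^-1.
Proof.
move=> /andP[t0 t1].
set N : R := n%:R.
have N0 : 0 < N by rewrite ltr0n.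
set m := idxn t.
have hm : m%:R <= N * t <= m%:R + 1.
  have Nt0 : 0 <= N * t by rewrite mulr_ge0 ?ler0n.
  have := truncn_itv Nt0 => /andP[q1 q2].
  have NtN : N * t <= N by rewrite ler_piMr ?ler0n.
  rewrite /m /idxn -/N; case: (leqP (Num.truncn (N * t)) n.-1) => hq.
    by rewrite q1 natr1 ltW.
  idtac.
  have e : (n.-1 + 1 = n)%N by lia.
  have : (n <= Num.truncn (N * t))%N by lia.
  rewrite truncn_ge_nat // => hn.
  by rewrite natr1 prednK // NtN andbT (le_trans _ hn) // ler_nat; lia.
have -> : t - gp (idx t) = (N * t - m%:R - 2^-1) / N.
  rewrite /gp /= -/m -/N; field; exact: lt0r_neq0.
rewrite normrM normfV (gtr0_norm N0); rewrite ler_pdivrMr // ler_norml; move: hm => /andP[h1 h2].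
have -> : (2 * N)^-1 * N = 2^-1 by field; exact: lt0r_neq0.
apply/andP; split; lra.
Qed.

End Aux.

Definition cw {R : realType} {k n : nat} (f : {ffun 'I_k -> 'I_n}) : 'rV[R]_k :=
  \row_i gp n (f i).

Definition cb {R : realType} {k n : nat} (pr : pred {ffun 'I_k -> 'I_n}) : seq 'rV[R]_k :=
  [seq cw f | f <- enum {ffun 'I_k -> 'I_n} & pr f].

Lemma measurable_bigmax d (T : measurableType d) (R : realType) (I : Type)
  (s : seq I) (G : I -> T -> R) (x0 : T -> R) :
  measurable_fun setT x0 ->
  (forall i, measurable_fun setT (G i)) ->
  measurable_fun setT (fun x => \big[Num.max/x0 x]_(i <- s) G i x).
Proof.
move=> m0 mG; elim: s => [|c s IH].
  by under eq_fun do rewrite big_nil.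
under eq_fun do rewrite big_cons.
exact: measurable_realfun.measurable_maxr.
Qed.

Lemma measurable_bigmin d (T : measurableType d) (R : realType) (I : Type)
  (s : seq I) (G : I -> T -> R) (x0 : T -> R) :
  measurable_fun setT x0 ->
  (forall i, measurable_fun setT (G i)) ->
  measurable_fun setT (fun x => \big[Num.min/x0 x]_(i <- s) G i x).
Proof.
move=> m0 mG; elim: s => [|c s IH].
  by under eq_fun do rewrite big_nil.
under eq_fun do rewrite big_cons.
exact: measurable_realfun.measurable_minr.
Qed.

Lemma measurable_qerr d (T : measurableType d) (R : realType)
  (P : probability T R) k (Y : 'I_k -> {RV P >-> R}) (C : seq 'rV[R]_k) :
  measurable_fun setT (fun x => qerr C (rvec Y x)).
Proof.
have ms : forall a : 'rV[R]_k, measurable_fun setT (fun x => supnorm (rvec Y x - a)).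
  move=> a; rewrite /supnorm.
  apply: (@measurable_bigmax _ _ _ _ _ _ (fun _ => 0)) => // i.
  under eq_fun do rewrite !mxE.
  apply: measurableT_comp => //; apply: measurable_realfun.measurable_funB => //.
case: C => [|a0 C] /=; first exact: measurable_cst.
exact: (@measurable_bigmin _ _ _ _ _ _ (fun x => supnorm (rvec Y x - a0))).
Qed.

Lemma qerr_cb_le (R : realType) k n (n0 : (0 < n)%N) (pr : pred {ffun 'I_k -> 'I_n})
  (y : 'rV[R]_k) e :
  (2 * n%:R)^-1 <= e -> (forall i, 0 <= y ord0 i <= 1) ->
  pr [ffun i => idx n n0 (y ord0 i)] -> qerr (cb pr) y <= e.
Proof.
move=> he hy hpr.
have e0 : 0 <= e by apply: le_trans he; rewrite invr_ge0 mulr_ge0 ?ler0n.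
apply: le_trans (@qerr_le _ _ _ _ (cw [ffun i => idx n n0 (y ord0 i)]) _) _.
  by apply: map_f; rewrite mem_filter hpr mem_enum.
apply: supnorm_le => // i; rewrite !mxE ffunE.
apply: (le_trans _ he); exact: idx_bound.
Qed.

Lemma key d (T : measurableType d) (R : realType) (P : probability T R) k
  (Y : 'I_k -> {RV P >-> R}) n (n0 : (0 < n)%N) (pr : pred {ffun 'I_k -> 'I_n}) s e :
  0 < s -> (2 * n%:R)^-1 <= e ->
  (forall i x, 0 <= Y i x <= 1) ->
  {ae P, forall x, pr [ffun i => idx n n0 (Y i x)]} ->
  (distortion Y s (cb pr) <= e%:E)%E.
Proof.
move=> s0 he hY hae.
have e0 : 0 <= e by apply: le_trans he; rewrite invr_ge0 mulr_ge0 ?ler0n.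
have mf : measurable_fun setT (fun x => (qerr (cb pr) (rvec Y x) `^ s)%:E).
  apply: (@measurableT_comp _ _ _ _ _ _ EFin); first exact: EFin_measurable.
  apply: (measurableT_comp (measurable_powR s)); exact: measurable_qerr.
have hint : (\int[P]_x (qerr (cb pr) (rvec Y x) `^ s)%:E <= (e `^ s)%:E)%E.
  apply: le_trans (@ae_ge0_le_integral _ _ _ P setT _ _ (cst (e `^ s)%:E) _ _ _ _ _) _.
  - by [].
  - by move=> x _; rewrite lee_fin powR_ge0.
  - exact: mf.
  - by move=> x _; rewrite lee_fin powR_ge0.
  - exact: measurable_cst.
  - apply: filterS hae => x hx _ /=; rewrite lee_fin.
    apply: ge0_ler_powR; [exact: ltW | by rewrite nnegrE qerr_ge0 | by rewrite nnegrE | ].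
    apply: qerr_cb_le => // [i|]; first by rewrite mxE.
    by under eq_ffun do rewrite mxE.
  - rewrite integral_cst //; rewrite le_eqVlt; apply/orP; left; apply/eqP; rewrite -[RHS]mule1; congr (_ * _)%E; exact: probability_setT.
rewrite /distortion.
have i1 : (\int[P]_x (qerr (cb pr) (rvec Y x) `^ s)%:E \in (`[0%E, +oo%E])%R)%E.
  by rewrite in_itv /= leey andbT; apply: integral_ge0 => x _; rewrite lee_fin powR_ge0.
have i2 : ((e `^ s)%:E \in (`[0%E, +oo%E])%R)%E.
  by rewrite in_itv /= leey andbT lee_fin powR_ge0.
have := @gt0_ler_poweR _ s^-1 _ _ _ i1 i2 hint.
by rewrite poweR_EFin -powRrM mulfV ?gt_eqF // powRr1 //; apply; rewrite invr_ge0 ltW.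
Qed.

Lemma size_cb (R : realType) k n (pr : pred {ffun 'I_k -> 'I_n}) :
  (size (undup (@cb R k n pr)) <= n ^ k)%N.
Proof.
apply: leq_trans (size_undup _) _.
rewrite size_map size_filter (leq_trans (count_size _ _)) //.
by rewrite -cardE card_ffun !card_ord.
Qed.

Lemma main_gen d (T : measurableType d) (R : realType) (P : probability T R) k
  (Y : 'I_k -> {RV P >-> R}) (adm : seq 'rV[R]_k -> Prop) :
  (1 <= k)%N ->
  (forall i x, 0 <= Y i x <= 1) ->
  (forall n (n0 : (0 < n)%N), exists pr : pred {ffun 'I_k -> 'I_n},
     [/\ pr [ffun=> Ordinal n0], adm (cb pr) &
      {ae P, forall x, pr [ffun i => idx n n0 (Y i x)]}]) ->
  forall s r : R, 0 < s -> 0 <= r ->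
     (Dq_restr Y s r adm <= (expR (- r / k%:R))%:E)%E.
Proof.
move=> k1 hY hpr s r s0 r0.
set x := expR (r / k%:R).
have K0 : 0 < k%:R :> R by rewrite ltr0n.
have x1 : 1 <= x by rewrite /x; apply: le_trans _ (expR_ge1Dx _); rewrite lerDl divr_ge0 // ltW.
set n := Num.truncn x.
have n0 : (0 < n)%N by rewrite truncn_gt0.
have [nx xn] : n%:R <= x /\ x < n.+1%:R.
  by have /andP[] := truncn_itv (le_trans ler01 x1).
have [pr [p0 padm pae]] := hpr n n0.
have Cne : @cb R k n pr <> [::].
  have : cw [ffun=> Ordinal n0] \in @cb R k n pr.
    by apply: map_f; rewrite mem_filter p0 mem_enum.
  by move=> h E; rewrite E in h.
have hm : (0 < size (undup (@cb R k n pr)))%N.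
  have : cw [ffun=> Ordinal n0] \in undup (@cb R k n pr).
    by rewrite mem_undup; apply: map_f; rewrite mem_filter p0 mem_enum.
  move=> h; rewrite lt0n size_eq0; apply/eqP => E; by rewrite E in h.
have hrate : ln (size (undup (@cb R k n pr)))%:R <= r.
  have npos : 0 < n%:R :> R by rewrite ltr0n.
  apply: (@le_trans _ _ (ln ((n%:R : R) ^+ k))).
    rewrite ler_ln ?posrE ?exprn_gt0 ?ltr0n // -natrX ler_nat; exact: size_cb.
  rewrite lnXn // -[_ *+ k]mulr_natr -ler_pdivlMr //.
  have : ln n%:R <= r / k%:R.
    by rewrite -[leRHS]expRK /x ler_ln ?posrE ?expR_gt0.
  by [].
have hS : [set distortion Y s C | C in [set C | rate_ok r C /\ adm C]]
    (distortion Y s (cb pr)) by exists (cb pr).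
apply: le_trans (ereal_inf_lbound hS) _.
apply: key => //.
rewrite mulNr expRN -/x lef_pV2 ?posrE ?mulr_gt0 ?ltr0n ?expR_gt0 //.
apply: (le_trans (ltW xn)); rewrite -natr1 -[in leRHS](natr1 1%N).
by rewrite mulrDl mul1r lerD2l ler1n.
Qed.

Theorem lemma3 (d : measure_display) (T : measurableType d) (R : realType)
  (P : probability T R) (k : nat) (Y : 'I_k -> {RV P >-> R}) :
  (1 <= k)%N ->
  (forall i x, 0 <= Y i x <= 1) ->
  (forall s r : R, 0 < s -> 0 <= r ->
     (Dq Y s r <= (expR (- r / k%:R))%:E)%E) /\
  ({ae P, forall x, forall i j : 'I_k, (i <= j)%N -> Y i x <= Y j x} ->
   forall s r : R, 0 < s -> 0 <= r ->
     (Dq_restr Y s r monotone_codebook <= (expR (- r / k%:R))%:E)%E).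
Proof.
move=> k1 hY; split.
  move=> s r s0 r0; rewrite /Dq; apply: main_gen => // n n0.
  by exists predT; split => //; exact: aeW.
move=> hmono s r s0 r0; apply: main_gen => // n n0.
exists (fun f : {ffun 'I_k -> 'I_n} =>
  [forall i : 'I_k, forall j : 'I_k, (i <= j)%N ==> (f i <= f j)%N]); split.
- by apply/forallP => i; apply/forallP => j; apply/implyP => _; rewrite !ffunE.
- move=> a /mapP [f]; rewrite mem_filter => /andP[hf _] -> i j hij; rewrite !mxE.
  apply: gp_mono; move: hf => /= /forallP/(_ i)/forallP/(_ j)/implyP; exact.
- apply: filterS hmono => x hx; apply/forallP => i; apply/forallP => j.
  apply/implyP => hij; rewrite !ffunE; apply: idx_mono; exact: hx.
Qed.
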